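(* The assignment $\max:\underline{\mathrm{IN}}\to\underline{\mathrm{G}}$ sending an interval domain $(D,\mathrm{left},\mathrm{right})$ to $(\max(D),\le)$ and an arrow $f:D\to E$ to its restriction $f|_{\max(D)}:\max(D)\to\max(E)$ is a functor.
   Context: Order notions: directed/filtered sets, suprema $\bigsqcup$, infima $\bigwedge$, the way-below relation $x\ll y$ (for every directed $S$ with a supremum, $y\sqsubseteq\bigsqcup S$ implies $x\sqsubseteq s$ for some $s\in S$), $\Uparrow x=\{a:x\ll a\}$, $\Downarrow x=\{a:a\ll x\}$; a poset is continuous if some subset $B$ has $B\cap\Downarrow x$ containing a directed set with supremum $x$ for every $x$; a continuous dcpo additionally has suprema of all directed sets; $\max(D)$ is the set of maximal elements; the Scott topology consists of upper sets $U$ with $\bigsqcup S\in U\Rightarrow S\cap U\neq\emptyset$ for directed $S$. A continuous poset is bicontinuous if (1) $x\ll y$ iff for every filtered $S$ with an infimum, $\bigwedge S\sqsubseteq x$ implies $s\sqsubseteq y$ for some $s\in S$, and (2) each $\Uparrow x$ is filtered with infimum $x$; its interval topology has basis $\{z: a\ll z\ll b\}$. A globally hyperbolic poset is a bicontinuous poset $(X,\le)$ whose closed intervals $[a,b]=\{z:a\le z\le b\}$ are compact in the interval topology. $\underline{\mathrm{G}}$ is the category whose objects are globally hyperbolic posets and whose arrows are monotone maps continuous for the interval topologies. An interval poset is a poset $D$ with maps $\mathrm{left},\mathrm{right}:D\to\max(D)$ such that (writing $\sqcap$ for binary infimum, assumed to exist only where named) $x=\mathrm{left}(x)\sqcap\mathrm{right}(x)$;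 if $\mathrm{right}(x)=\mathrm{left}(y)$ then $\mathrm{left}(x\sqcap y)=\mathrm{left}(x)$, $\mathrm{right}(x\sqcap y)=\mathrm{right}(y)$; and for $p\in\max(D)$ with $x\sqsubseteq p$, $\mathrm{left}(\mathrm{left}(x)\sqcap p)=\mathrm{left}(x)$, $\mathrm{right}(\mathrm{left}(x)\sqcap p)=p$, $\mathrm{left}(p\sqcap\mathrm{right}(x))=p$, $\mathrm{right}(p\sqcap\mathrm{right}(x))=\mathrm{right}(x)$. Define $a\le b$ on $\max(D)$ iff $a=\mathrm{left}(z),b=\mathrm{right}(z)$ for some $z$; let $[p,\cdot]=\mathrm{left}^{-1}(p)$, $[\cdot,q]=\mathrm{right}^{-1}(q)$. An interval domain is an interval poset with $D$ a continuous dcpo such that: (i) if $p\in\Uparrow x\cap\max(D)$ then $\Uparrow(\mathrm{left}(x)\sqcap p)$ and $\Uparrow(p\sqcap\mathrm{right}(x))$ are nonempty; (ii) for each $x$, TFAE: $\Uparrow x\neq\emptyset$; for all $y\in[\mathrm{left}(x),\cdot]$ with $y\sqsubseteq x$, $y\ll\mathrm{right}(y)$ in the subposet $[\cdot,\mathrm{right}(y)]$; for all $y\in[\cdot,\mathrm{right}(x)]$ with $y\sqsubseteq x$, $y\ll\mathrm{left}(y)$ in the subposet $[\mathrm{left}(y),\cdot]$; (iii) for directed $S\subseteq[p,\cdot]$, $\mathrm{left}(\bigsqcup S)=p$ and $\mathrm{right}(\bigsqcup S)=\mathrm{right}(\bigsqcup T)$ for every directed $T\subseteq[q,\cdot]$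 with $\mathrm{right}(T)=\mathrm{right}(S)$, and dually for directed $S\subseteq[\cdot,q]$, $\mathrm{right}(\bigsqcup S)=q$ and $\mathrm{left}(\bigsqcup S)=\mathrm{left}(\bigsqcup T)$ for every directed $T\subseteq[\cdot,p]$ with $\mathrm{left}(T)=\mathrm{left}(S)$; (iv) each $\{y\in\max(D):x\sqsubseteq y\}$ is Scott compact. $\underline{\mathrm{IN}}$ is the category of interval domains with arrows the Scott continuous maps $f:D\to E$ satisfying $f\circ\mathrm{left}_D=\mathrm{left}_E\circ f$ and $f\circ\mathrm{right}_D=\mathrm{right}_E\circ f$. *)

(* Defs.v *)
From Stdlib Require Import List.

Definition poset {T : Type} (le : T -> T -> Prop) : Prop :=
  (forall x, le x x) /\
  (forall x y, le x y -> le y x -> x = y) /\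
  (forall x y z, le x y -> le y z -> le x z).

Definition directed {T : Type} (le : T -> T -> Prop) (S : T -> Prop) : Prop :=
  (exists x, S x) /\
  (forall x y, S x -> S y -> exists z, S z /\ le x z /\ le y z).

Definition filtered {T : Type} (le : T -> T -> Prop) (S : T -> Prop) : Prop :=
  (exists x, S x) /\
  (forall x y, S x -> S y -> exists z, S z /\ le z x /\ le z y).

Definition is_sup {T : Type} (le : T -> T -> Prop) (S : T -> Prop) (u : T) : Prop :=
  (forall s, S s -> le s u) /\
  (forall v, (forall s, S s -> le s v) -> le u v).

Definition is_inf {T : Type} (le : T -> T -> Prop) (S : T -> Prop) (u : T) : Prop :=
  (forall s, S s -> le u s) /\
  (forall v, (forall s, S s -> le v s) -> le v u).

Definition is_meet {T : Type} (le : T -> T -> Prop) (x y m : T) : Prop :=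
  is_inf le (fun z => z = x \/ z = y) m.

Definition way_below {T : Type} (le : T -> T -> Prop) (x y : T) : Prop :=
  forall (S : T -> Prop) (u : T), directed le S -> is_sup le S u -> le y u ->
    exists s, S s /\ le x s.

Definition is_sup_in {T : Type} (P : T -> Prop) (le : T -> T -> Prop)
    (S : T -> Prop) (u : T) : Prop :=
  P u /\ (forall s, S s -> le s u) /\
  (forall v, P v -> (forall s, S s -> le s v) -> le u v).

Definition way_below_in {T : Type} (P : T -> Prop) (le : T -> T -> Prop)
    (x y : T) : Prop :=
  forall (S : T -> Prop) (u : T), (forall s, S s -> P s) -> directed le S ->
    is_sup_in P le S u -> le y u -> exists s, S s /\ le x s.

Definition uuarrow {T : Type} (le : T -> T -> Prop) (x : T) : T -> Prop :=
  fun a => way_below le x a.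

Definition continuous_poset {T : Type} (le : T -> T -> Prop) : Prop :=
  poset le /\
  exists B : T -> Prop, forall x, exists S : T -> Prop,
    (forall s, S s -> B s /\ way_below le s x) /\ directed le S /\ is_sup le S x.

Definition dcpo {T : Type} (le : T -> T -> Prop) : Prop :=
  forall S, directed le S -> exists u, is_sup le S u.

Definition continuous_dcpo {T : Type} (le : T -> T -> Prop) : Prop :=
  continuous_poset le /\ dcpo le.

Definition is_max {T : Type} (le : T -> T -> Prop) (x : T) : Prop :=
  forall y, le x y -> y = x.

Definition scott_open {T : Type} (le : T -> T -> Prop) (U : T -> Prop) : Prop :=
  (forall x y, U x -> le x y -> U y) /\
  (forall S u, directed le S -> is_sup le S u -> U u -> exists s, S s /\ U s).

Definition compact_in {T : Type} (opn : (T -> Prop) -> Prop) (K : T -> Prop) : Prop :=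
  forall (I : Type) (U : I -> T -> Prop),
    (forall i, opn (U i)) ->
    (forall x, K x -> exists i, U i x) ->
    exists l : list I, forall x, K x -> exists i, In i l /\ U i x.

Definition continuous_map {A B : Type} (opnA : (A -> Prop) -> Prop)
    (opnB : (B -> Prop) -> Prop) (f : A -> B) : Prop :=
  forall V, opnB V -> opnA (fun x => V (f x)).

Definition monotone {A B : Type} (leA : A -> A -> Prop) (leB : B -> B -> Prop)
    (f : A -> B) : Prop :=
  forall x y, leA x y -> leB (f x) (f y).

Definition bicontinuous {T : Type} (le : T -> T -> Prop) : Prop :=
  continuous_poset le /\
  (forall x y, way_below le x y <->
     (forall S u, filtered le S -> is_inf le S u -> le u x ->
        exists s, S s /\ le s y)) /\
  (forall x, filtered le (uuarrow le x) /\ is_inf le (uuarrow le x) x).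

(** interval topology: open sets are unions of basic sets {z : a ≪ z ≪ b} *)
Definition interval_open {T : Type} (le : T -> T -> Prop) (U : T -> Prop) : Prop :=
  forall z, U z -> exists a b, way_below le a z /\ way_below le z b /\
    (forall w, way_below le a w -> way_below le w b -> U w).

Definition globally_hyperbolic {T : Type} (le : T -> T -> Prop) : Prop :=
  bicontinuous le /\
  forall a b, compact_in (interval_open le) (fun z => le a z /\ le z b).

Definition G_arrow {A B : Type} (leA : A -> A -> Prop) (leB : B -> B -> Prop)
    (f : A -> B) : Prop :=
  monotone leA leB f /\ continuous_map (interval_open leA) (interval_open leB) f.

Definition interval_poset {T : Type} (le : T -> T -> Prop) (left right : T -> T) : Prop :=
  poset le /\
  (forall x, is_max le (left x) /\ is_max le (right x)) /\
  (forall x, is_meet le (left x) (right x) x) /\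
  (forall x y, right x = left y ->
     exists m, is_meet le x y m /\ left m = left x /\ right m = right y) /\
  (forall x p, is_max le p -> le x p ->
     (exists m, is_meet le (left x) p m /\ left m = left x /\ right m = p) /\
     (exists m, is_meet le p (right x) m /\ left m = p /\ right m = right x)).

Definition interval_domain {T : Type} (le : T -> T -> Prop) (left right : T -> T) : Prop :=
  interval_poset le left right /\
  continuous_dcpo le /\
  (* (i) *)
  (forall x p, is_max le p -> way_below le x p ->
     (forall m, is_meet le (left x) p m -> exists a, way_below le m a) /\
     (forall m, is_meet le p (right x) m -> exists a, way_below le m a)) /\
  (* (ii) *)
  (forall x,
     let A := exists a, way_below le x a in
     let B := forall y, left y = left x -> le y x ->
                way_below_in (fun z => right z = right y) le y (right y) in
     let C := forall y, right y = right x -> le y x ->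
                way_below_in (fun z => left z = left y) le y (left y) in
     (A <-> B) /\ (A <-> C)) /\
  (* (iii) *)
  (forall p (S : T -> Prop) u, directed le S -> (forall s, S s -> left s = p) ->
     is_sup le S u ->
     left u = p /\
     (forall q (S' : T -> Prop) u', directed le S' -> (forall t, S' t -> left t = q) ->
        (forall z, (exists t, S' t /\ right t = z) <-> (exists s, S s /\ right s = z)) ->
        is_sup le S' u' -> right u = right u')) /\
  (forall q (S : T -> Prop) u, directed le S -> (forall s, S s -> right s = q) ->
     is_sup le S u ->
     right u = q /\
     (forall p (S' : T -> Prop) u', directed le S' -> (forall t, S' t -> right t = p) ->
        (forall z, (exists t, S' t /\ left t = z) <-> (exists s, S s /\ left s = z)) ->
        is_sup le S' u' -> left u = left u')) /\
  (* (iv) *)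
  (forall x, compact_in (scott_open le) (fun y => is_max le y /\ le x y)).

Record IntervalDomain : Type := {
  idT :> Type;
  idle : idT -> idT -> Prop;
  idleft : idT -> idT;
  idright : idT -> idT;
  id_ax : interval_domain idle idleft idright
}.

Definition IN_arrow (D E : IntervalDomain) (f : D -> E) : Prop :=
  continuous_map (scott_open (idle D)) (scott_open (idle E)) f /\
  (forall x, f (idleft D x) = idleft E (f x)) /\
  (forall x, f (idright D x) = idright E (f x)).

Definition maxD (D : IntervalDomain) : Type := { x : D | is_max (idle D) x }.

Definition maxle (D : IntervalDomain) (a b : maxD D) : Prop :=
  exists z : D, proj1_sig a = idleft D z /\ proj1_sig b = idright D z.

Definition restr {D E : IntervalDomain} (f : D -> E)
    (Hm : forall x, is_max (idle D) x -> is_max (idle E) (f x)) (a : maxD D) : maxD E :=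
  exist _ (f (proj1_sig a)) (Hm (proj1_sig a) (proj2_sig a)).

(* Main.v *)
Require Import Defs.
From Stdlib Require Import List Classical FunctionalExtensionality PropExtensionality ProofIrrelevance.

Section Order.
Variable X : Type.
Variable R : X -> X -> Prop.
Hypothesis HP : poset R.

Lemma o_refl x : R x x. Proof. exact (proj1 HP x). Qed.
Lemma o_trans x y z : R x y -> R y z -> R x z. Proof. exact (proj2 (proj2 HP) x y z). Qed.

Lemma wb_le x y : way_below R x y -> R x y.
Proof.
  intro H. destruct (H (fun s => s = y) y) as [s [Hs Hxs]].
  - split. exists y; reflexivity. intros a b -> ->. exists y. repeat split; apply o_refl.
  - split. intros s ->; apply o_refl. intros v Hv; apply Hv; reflexivity.
  - apply o_refl.
  - subst; exact Hxs.
Qed.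

Lemma wb_mono x' x y y' : R x' x -> way_below R x y -> R y y' -> way_below R x' y'.
Proof.
  intros H1 H2 H3 S u Hd Hs Hu.
  destruct (H2 S u Hd Hs (o_trans _ _ _ H3 Hu)) as [s [Hs' Hxs]].
  exists s; split; auto. eapply o_trans; eauto.
Qed.

Lemma interp x z : continuous_poset R -> way_below R x z ->
  exists y, way_below R x y /\ way_below R y z.
Proof.
  intros [_ [B HB]] Hxz.
  set (T := fun c => exists c', way_below R c c' /\ way_below R c' z).
  assert (Hd: directed R T).
  { destruct (HB z) as [Sz [HSz [Hdz Hsz]]].
    split.
    - destruct (proj1 Hdz) as [s Hs]. destruct (HB s) as [Ss [HSs [Hds _]]].
      destruct (proj1 Hds) as [t Ht]. exists t, s.
      split; [apply (proj2 (HSs t Ht)) | apply (proj2 (HSz s Hs))].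
    - intros c1 c2 [c1' [H11 H12]] [c2' [H21 H22]].
      destruct (H12 Sz z Hdz Hsz (o_refl z)) as [s1 [Hs1 Hc1s1]].
      destruct (H22 Sz z Hdz Hsz (o_refl z)) as [s2 [Hs2 Hc2s2]].
      destruct (proj2 Hdz s1 s2 Hs1 Hs2) as [s3 [Hs3 [H13 H23]]].
      assert (Hs3z : way_below R s3 z) by exact (proj2 (HSz s3 Hs3)).
      assert (Hc1 : way_below R c1 s3) by
        exact (wb_mono c1 c1 c1' s3 (o_refl _) H11 (o_trans _ _ _ Hc1s1 H13)).
      assert (Hc2 : way_below R c2 s3) by
        exact (wb_mono c2 c2 c2' s3 (o_refl _) H21 (o_trans _ _ _ Hc2s2 H23)).
      destruct (HB s3) as [S3 [HS3 [Hd3 Hsup3]]].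
      destruct (Hc1 S3 s3 Hd3 Hsup3 (o_refl _)) as [t1 [Ht1 Hct1]].
      destruct (Hc2 S3 s3 Hd3 Hsup3 (o_refl _)) as [t2 [Ht2 Hct2]].
      destruct (proj2 Hd3 t1 t2 Ht1 Ht2) as [t3 [Ht3 [Ht13 Ht23]]].
      exists t3. split.
      + exists s3. split; [exact (proj2 (HS3 t3 Ht3)) | exact Hs3z].
      + split; eapply o_trans; eauto. }
  assert (Hs: is_sup R T z).
  { split.
    - intros c [c' [H1 H2]]. eapply o_trans; apply wb_le; eauto.
    - intros v Hv. destruct (HB z) as [Sz [HSz [Hdz Hsz]]]. apply (proj2 Hsz).
      intros s Hs. destruct (HB s) as [Ss [HSs [Hds Hss]]]. apply (proj2 Hss).
      intros t Ht. apply Hv. exists s.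
      split; [exact (proj2 (HSs t Ht)) | exact (proj2 (HSz s Hs))]. }
  destruct (Hxz T z Hd Hs (o_refl z)) as [c [[c' [H1 H2]] Hxc]].
  exists c'. split; [apply (wb_mono x c c' c'); auto; apply o_refl | auto].
Qed.

End Order.

Lemma poset_flip {X} (R : X -> X -> Prop) : poset R -> poset (fun a b => R b a).
Proof.
  intros [H1 [H2 H3]]. split; [|split]; intros; eauto.
Qed.

Lemma meet_le1 {T} (le : T -> T -> Prop) x y m : is_meet le x y m -> le m x.
Proof. intro H. apply (proj1 H). left; reflexivity. Qed.
Lemma meet_le2 {T} (le : T -> T -> Prop) x y m : is_meet le x y m -> le m y.
Proof. intro H. apply (proj1 H). right; reflexivity. Qed.
Lemma meet_glb {T} (le : T -> T -> Prop) x y m v : is_meet le x y m -> le v x -> le v y -> le v m.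
Proof. intros H H1 H2. apply (proj2 H). intros s [-> | ->]; auto. Qed.
Lemma meet_sym {T} (le : T -> T -> Prop) x y m : is_meet le x y m -> is_meet le y x m.
Proof.
  intros [H1 H2]. split.
  - intros s Hs. apply H1. tauto.
  - intros v Hv. apply H2. intros s Hs. apply Hv. tauto.
Qed.

Lemma maxD_eq (D : IntervalDomain) (a b : maxD D) : proj1_sig a = proj1_sig b -> a = b.
Proof.
  destruct a as [a Ha], b as [b Hb]; simpl; intros ->. f_equal. apply proof_irrelevance.
Qed.

Section Basics.
Variable D : IntervalDomain.
Local Notation le := (idle D).
Local Notation lf := (idleft D).
Local Notation rt := (idright D).

Lemma ip : interval_poset le lf rt. Proof. exact (proj1 (id_ax D)). Qed.
Lemma d_pos : poset le. Proof. exact (proj1 ip). Qed.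
Lemma d_refl x : le x x. Proof. exact (proj1 d_pos x). Qed.
Lemma d_anti x y : le x y -> le y x -> x = y. Proof. exact (proj1 (proj2 d_pos) x y). Qed.
Lemma d_trans x y z : le x y -> le y z -> le x z. Proof. exact (proj2 (proj2 d_pos) x y z). Qed.
Lemma max_l x : is_max le (lf x). Proof. exact (proj1 (proj1 (proj2 ip) x)). Qed.
Lemma max_r x : is_max le (rt x). Proof. exact (proj2 (proj1 (proj2 ip) x)). Qed.
Lemma meet_lr x : is_meet le (lf x) (rt x) x. Proof. exact (proj1 (proj2 (proj2 ip)) x). Qed.
Lemma comp_ax x y : rt x = lf y -> exists m, is_meet le x y m /\ lf m = lf x /\ rt m = rt y.
Proof. exact (proj1 (proj2 (proj2 (proj2 ip))) x y). Qed.
Lemma last_ax x p : is_max le p -> le x p ->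
     (exists m, is_meet le (lf x) p m /\ lf m = lf x /\ rt m = p) /\
     (exists m, is_meet le p (rt x) m /\ lf m = p /\ rt m = rt x).
Proof. exact (proj2 (proj2 (proj2 (proj2 ip))) x p). Qed.
Lemma cdcpo : continuous_dcpo le. Proof. exact (proj1 (proj2 (id_ax D))). Qed.
Lemma ax_i : forall x p, is_max le p -> way_below le x p ->
     (forall m, is_meet le (lf x) p m -> exists a, way_below le m a) /\
     (forall m, is_meet le p (rt x) m -> exists a, way_below le m a).
Proof. exact (proj1 (proj2 (proj2 (id_ax D)))). Qed.
Lemma ax_ii x :
     ((exists a, way_below le x a) <->
      (forall y, lf y = lf x -> le y x ->
                way_below_in (fun z => rt z = rt y) le y (rt y))) /\
     ((exists a, way_below le x a) <->
      (forall y, rt y = rt x -> le y x ->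
                way_below_in (fun z => lf z = lf y) le y (lf y))).
Proof. exact (proj1 (proj2 (proj2 (proj2 (id_ax D)))) x). Qed.
Lemma ax_iiib : forall q (S : D -> Prop) u, directed le S -> (forall s, S s -> rt s = q) ->
     is_sup le S u ->
     rt u = q /\
     (forall p (S' : D -> Prop) u', directed le S' -> (forall t, S' t -> rt t = p) ->
        (forall z, (exists t, S' t /\ lf t = z) <-> (exists s, S s /\ lf s = z)) ->
        is_sup le S' u' -> lf u = lf u').
Proof. exact (proj1 (proj2 (proj2 (proj2 (proj2 (proj2 (id_ax D))))))). Qed.
Lemma ax_iv : forall x, compact_in (scott_open le) (fun y => is_max le y /\ le x y).
Proof. exact (proj2 (proj2 (proj2 (proj2 (proj2 (proj2 (id_ax D))))))). Qed.

Lemma d_le_l x : le x (lf x). Proof. exact (meet_le1 _ _ _ _ (meet_lr x)). Qed.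
Lemma d_le_r x : le x (rt x). Proof. exact (meet_le2 _ _ _ _ (meet_lr x)). Qed.
Lemma lf_max p : is_max le p -> lf p = p. Proof. intro H. apply H, d_le_l. Qed.
Lemma rt_max p : is_max le p -> rt p = p. Proof. intro H. apply H, d_le_r. Qed.

Lemma meet_uniq x y m m' : is_meet le x y m -> is_meet le x y m' -> m = m'.
Proof.
  intros H H'. apply d_anti.
  - apply (meet_glb _ _ _ _ _ H'); [apply (meet_le1 _ _ _ _ H) | apply (meet_le2 _ _ _ _ H)].
  - apply (meet_glb _ _ _ _ _ H); [apply (meet_le1 _ _ _ _ H') | apply (meet_le2 _ _ _ _ H')].
Qed.

Lemma lr_inj x y : lf x = lf y -> rt x = rt y -> x = y.
Proof.
  intros H1 H2. pose proof (meet_lr x) as Hx. rewrite H1, H2 in Hx.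
  exact (meet_uniq _ _ _ _ Hx (meet_lr y)).
Qed.

Definition mle (a b : D) := exists z, a = lf z /\ b = rt z.

Lemma mle_refl p : is_max le p -> mle p p.
Proof. intro H. exists p. rewrite lf_max, rt_max by exact H. auto. Qed.

Lemma mle_lr x : mle (lf x) (rt x). Proof. exists x; auto. Qed.

Lemma mle_trans a b c : mle a b -> mle b c -> mle a c.
Proof.
  intros [z [-> Hb]] [w [Hb' ->]].
  destruct (comp_ax z w (eq_trans (eq_sym Hb) Hb')) as [m [_ [H1 H2]]].
  exists m; auto.
Qed.

Lemma mle_anti a b : mle a b -> mle b a -> a = b.
Proof.
  intros [z [Ha Hb]] [w [Hb' Ha']].
  pose proof (meet_lr z) as Hz. pose proof (meet_lr w) as Hw.
  rewrite <- Ha, <- Hb in Hz. rewrite <- Hb', <- Ha' in Hw.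
  apply meet_sym in Hw. pose proof (meet_uniq _ _ _ _ Hz Hw). subst w.
  congruence.
Qed.

Lemma le_max_iff p x : is_max le p -> (le x p <-> mle (lf x) p /\ mle p (rt x)).
Proof.
  intros Hp. split.
  - intro H. destruct (last_ax x p Hp H) as [[m1 [_ [H11 H12]]] [m2 [_ [H21 H22]]]].
    split; [exists m1 | exists m2]; auto.
  - intros [[z1 [H11 H12]] [z2 [H21 H22]]].
    destruct (comp_ax z1 z2 (eq_trans (eq_sym H12) H21)) as [m [Hm [Hm1 Hm2]]].
    assert (m = x) by (apply lr_inj; congruence). subst m.
    apply d_trans with z1; [exact (meet_le1 _ _ _ _ Hm) |].
    rewrite H12. apply d_le_r.
Qed.

Lemma le_iff x y : le x y <-> mle (lf x) (lf y) /\ mle (rt y) (rt x).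
Proof.
  split.
  - intro H. split.
    + apply (proj1 (le_max_iff _ x (max_l y))). apply d_trans with y; auto using d_le_l.
    + apply (proj1 (le_max_iff _ x (max_r y))). apply d_trans with y; auto using d_le_r.
  - intros [H1 H2]. apply (meet_glb _ _ _ _ _ (meet_lr y)).
    + apply (proj2 (le_max_iff _ x (max_l y))). split; auto.
      apply mle_trans with (rt y); auto using mle_lr.
    + apply (proj2 (le_max_iff _ x (max_r y))). split; auto.
      apply mle_trans with (lf y); auto using mle_lr.
Qed.

Local Notation R := (maxle D).

Definition Lm (y : D) : maxD D := exist _ (lf y) (max_l y).
Definition Rm (y : D) : maxD D := exist _ (rt y) (max_r y).

Lemma M_poset : poset R.
Proof.
  split; [|split].
  - intro a. exact (mle_refl _ (proj2_sig a)).
  - intros a b H1 H2. apply maxD_eq. exact (mle_anti _ _ H1 H2).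
  - intros a b c H1 H2. exact (mle_trans _ _ _ H1 H2).
Qed.


Definition Tset (S : maxD D -> Prop) (d : maxD D) : D -> Prop :=
  fun w => exists c, S c /\ lf w = proj1_sig c /\ rt w = proj1_sig d.

Lemma Tset_dir S d : directed R S -> (forall c, S c -> R c d) -> directed le (Tset S d).
Proof.
  intros [[c0 Hc0] Hd] Hb. split.
  - destruct (Hb c0 Hc0) as [z [H1 H2]]. exists z, c0. auto.
  - intros w1 w2 [c1 [Hc1 [H11 H12]]] [c2 [Hc2 [H21 H22]]].
    destruct (Hd c1 c2 Hc1 Hc2) as [c3 [Hc3 [H13 H23]]].
    destruct (Hb c3 Hc3) as [z [Hz1 Hz2]].
    exists z. split; [exists c3; auto|].
    split; apply le_iff; split.
    + rewrite H11, <- Hz1. exact H13.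
    + rewrite H12, <- Hz2. exact (mle_refl _ (proj2_sig d)).
    + rewrite H21, <- Hz1. exact H23.
    + rewrite H22, <- Hz2. exact (mle_refl _ (proj2_sig d)).
Qed.

Lemma Tset_lefts S d : (forall c, S c -> R c d) ->
  forall z, (exists t, Tset S d t /\ lf t = z) <-> (exists c, S c /\ proj1_sig c = z).
Proof.
  intros Hb z. split.
  - intros [t [[c [Hc [H1 H2]]] H3]]. exists c. split; congruence.
  - intros [c [Hc H]]. destruct (Hb c Hc) as [w [H1 H2]].
    exists w. split; [exists c; auto | congruence].
Qed.

Lemma BC (S : maxD D -> Prop) (d : maxD D) :
  directed R S -> (forall c, S c -> R c d) -> exists e, is_sup R S e.
Proof.
  intros Hd Hb.
  destruct (proj2 cdcpo _ (Tset_dir S d Hd Hb)) as [w0 Hw0].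
  assert (HT : forall s, Tset S d s -> rt s = proj1_sig d).
  { intros s [c [_ [_ H]]]; exact H. }
  destruct (ax_iiib _ _ _ (Tset_dir S d Hd Hb) HT Hw0) as [Hr0 Hrest].
  exists (Lm w0). split.
  - intros c Hc. destruct (Hb c Hc) as [z [H1 H2]].
    assert (Hz : Tset S d z) by (exists c; auto).
    destruct (proj1 (le_iff z w0) (proj1 Hw0 z Hz)) as [H _].
    unfold maxle; simpl. rewrite H1. exact H.
  - intros v Hv.
    destruct (proj2 cdcpo _ (Tset_dir S v Hd Hv)) as [w1 Hw1].
    assert (HT' : forall s, Tset S v s -> rt s = proj1_sig v).
    { intros s [c [_ [_ H]]]; exact H. }
    destruct (ax_iiib _ _ _ (Tset_dir S v Hd Hv) HT' Hw1) as [Hr1 _].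
    assert (Heq : lf w0 = lf w1).
    { apply (Hrest _ _ _ (Tset_dir S v Hd Hv) HT').
      - intro z. rewrite (Tset_lefts S v Hv z), (Tset_lefts S d Hb z). tauto.
      - exact Hw1. }
    exists w1. simpl. split; [exact Heq | symmetry; exact Hr1].
Qed.

Lemma img_l_dir (S : D -> Prop) : directed le S ->
  directed R (fun c => exists y, S y /\ proj1_sig c = lf y).
Proof.
  intros [[s0 Hs0] Hd]. split.
  - exists (Lm s0), s0. auto.
  - intros c1 c2 [s1 [Hs1 H1]] [s2 [Hs2 H2]].
    destruct (Hd s1 s2 Hs1 Hs2) as [s3 [Hs3 [H13 H23]]].
    exists (Lm s3). split; [exists s3; auto|].
    split; unfold maxle; simpl.
    + rewrite H1. exact (proj1 (proj1 (le_iff _ _) H13)).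
    + rewrite H2. exact (proj1 (proj1 (le_iff _ _) H23)).
Qed.

Lemma K (z : D) (a b : maxD D) : proj1_sig a = lf z -> proj1_sig b = rt z ->
  (way_below R a b <-> exists c, way_below le z c).
Proof.
  intros Ha Hb. destruct (ax_ii z) as [HAB _]. split.
  - intro Hw. apply HAB. intros y Hly Hyz. unfold way_below_in.
    intros S u HSP Hdir [HPu [Hub Hlst]] Hru.
    assert (Hu : u = rt y) by exact (max_r y u Hru). subst u.
    set (SM := fun c : maxD D => exists s, S s /\ proj1_sig c = lf s).
    assert (HdM : directed R SM) by exact (img_l_dir S Hdir).
    assert (HbM : forall c, SM c -> R c (Rm y)).
    { intros c [s [Hs Hc]]. unfold maxle; simpl. rewrite Hc.
      exact (proj1 (proj1 (le_max_iff _ s (max_r y)) (Hub s Hs))). }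
    destruct (BC SM (Rm y) HdM HbM) as [e He].
    assert (Hsup : is_sup R SM (Rm y)).
    { split; [exact HbM|]. intros v Hv.
      apply (o_trans _ _ (M_poset) _ e); [| exact (proj2 He v Hv)].
      destruct (proj2 He (Rm y) HbM) as [w [Hw1 Hw2]]. simpl in Hw2.
      assert (Hle : le (rt y) w).
      { apply Hlst; [congruence|]. intros s Hs. apply le_iff. split.
        - rewrite <- Hw1. apply (proj1 He (Lm s)). exists s; auto.
        - rewrite <- Hw2, (HSP s Hs). exact (mle_refl _ (max_r y)). }
      pose proof (max_r y w Hle) as Hwy. unfold maxle; simpl.
      rewrite Hw1, Hwy, (lf_max _ (max_r y)). exact (mle_refl _ (max_r y)). }
    assert (Hbu : R b (Rm y)).
    { unfold maxle; simpl. rewrite Hb. exact (proj2 (proj1 (le_iff _ _) Hyz)). }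
    destruct (Hw SM (Rm y) HdM Hsup Hbu) as [c [[s [Hs Hc]] Hac]].
    exists s. split; [exact Hs|]. apply le_iff. split.
    + rewrite Hly, <- Ha, <- Hc. exact Hac.
    + rewrite (HSP s Hs). exact (mle_refl _ (max_r y)).
  - intros HA. pose proof (proj1 HAB HA) as HB. clear HA HAB.
    intros SM u Hdir Hsup Hbu.
    assert (Hab : R a b) by (exists z; auto).
    destruct (o_trans _ _ M_poset _ _ _ Hab Hbu) as [y [Hy1 Hy2]].
    assert (Hyz : le y z).
    { apply le_iff. split.
      - rewrite <- Hy1, <- Ha. exact (mle_refl _ (proj2_sig a)).
      - rewrite <- Hy2, <- Hb. exact Hbu. }
    pose proof (HB y (eq_trans (eq_sym Hy1) Ha) Hyz) as Hwi.
    set (S := Tset SM u).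
    assert (HSd : directed le S) by exact (Tset_dir SM u Hdir (proj1 Hsup)).
    assert (HSP : forall s, S s -> rt s = rt y).
    { intros s [c [_ [_ H]]]. congruence. }
    assert (Hsi : is_sup_in (fun w => rt w = rt y) le S (proj1_sig u)).
    { split; [|split].
      - rewrite (rt_max _ (proj2_sig u)). congruence.
      - intros w [c [Hc [H1 H2]]]. apply (le_max_iff _ _ (proj2_sig u)). split.
        + rewrite H1. exact (proj1 Hsup c Hc).
        + rewrite H2. exact (mle_refl _ (proj2_sig u)).
      - intros v Hv Hvub.
        assert (Hl : R u (Lm v)).
        { apply (proj2 Hsup). intros c Hc.
          destruct (proj1 Hsup c Hc) as [w [H1 H2]].
          assert (Sw : S w) by (exists c; auto).
          unfold maxle; simpl. rewrite H1.
          exact (proj1 (proj1 (le_iff _ _) (Hvub w Sw))). }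
        assert (Heq : lf v = proj1_sig u).
        { apply mle_anti; [| exact Hl].
          rewrite Hy2, <- Hv. apply mle_lr. }
        assert (v = proj1_sig u).
        { apply lr_inj.
          - rewrite Heq, (lf_max _ (proj2_sig u)). reflexivity.
          - rewrite (rt_max _ (proj2_sig u)), Hv, Hy2. reflexivity. }
        subst v. apply d_refl. }
    destruct (Hwi S (proj1_sig u) HSP HSd Hsi) as [w [[c [Hc [H1 H2]]] Hyw]].
    + rewrite <- Hy2. apply d_refl.
    + exists c. split; [exact Hc|].
      unfold maxle. rewrite Ha, <- H1.
      rewrite <- Ha, Hy1. exact (proj1 (proj1 (le_iff _ _) Hyw)).
Qed.

Lemma wb_left (y : D) (p a : maxD D) : way_below le y (proj1_sig p) -> proj1_sig a = lf y ->
  way_below R a p.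
Proof.
  intros Hw Ha.
  pose proof (wb_le _ _ d_pos _ _ Hw) as Hle.
  destruct (last_ax y _ (proj2_sig p) Hle) as [[m [Hm [Hlm Hrm]]] _].
  destruct (ax_i y _ (proj2_sig p) Hw) as [Hi _].
  apply (proj2 (K m a p (eq_trans Ha (eq_sym Hlm)) (eq_sym Hrm))).
  exact (Hi m Hm).
Qed.

Lemma cont : continuous_poset R.
Proof.
  split; [exact M_poset|]. exists (fun _ => True). intro x.
  destruct (proj2 (proj1 cdcpo)) as [B HB].
  destruct (HB (proj1_sig x)) as [SD [HS [Hd Hsup]]].
  exists (fun c => exists y, SD y /\ proj1_sig c = lf y). split; [|split].
  - intros c [y [Hy Hc]]. split; [exact I|].
    exact (wb_left y x c (proj2 (HS y Hy)) Hc).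
  - exact (img_l_dir SD Hd).
  - assert (Hub : forall c, (exists y, SD y /\ proj1_sig c = lf y) -> R c x).
    { intros c [y [Hy Hc]]. unfold maxle. rewrite Hc.
      exact (proj1 (proj1 (le_max_iff _ y (proj2_sig x)) (proj1 Hsup y Hy))). }
    split; [exact Hub|].
    intros v Hv.
    destruct (BC _ x (img_l_dir SD Hd) Hub) as [e He].
    apply (o_trans _ _ M_poset _ e); [| exact (proj2 He v Hv)].
    destruct (proj2 He x Hub) as [w [Hw1 Hw2]].
    assert (Hle : le (proj1_sig x) w).
    { apply (proj2 Hsup). intros y Hy. apply le_iff. split.
      - rewrite <- Hw1. apply (proj1 He (Lm y)). exists y; auto.
      - rewrite <- Hw2. exact (proj2 (proj1 (le_max_iff _ y (proj2_sig x)) (proj1 Hsup y Hy))). }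
    pose proof (proj2_sig x w Hle) as Hwx.
    unfold maxle. rewrite Hw1, Hwx, (lf_max _ (proj2_sig x)).
    exact (mle_refl _ (proj2_sig x)).
Qed.

Lemma sup_l (S : D -> Prop) u (a c : maxD D) : directed le S -> is_sup le S u ->
  proj1_sig c = lf u -> way_below R a c ->
  exists s (c' : maxD D), S s /\ proj1_sig c' = lf s /\ way_below R a c'.
Proof.
  intros Hd Hsup Hc Hac.
  destruct (interp _ _ M_poset _ _ cont Hac) as [c0 [Hac0 Hc0c]].
  set (SM := fun c : maxD D => exists y, S y /\ proj1_sig c = lf y).
  assert (Hub : forall c', SM c' -> R c' c).
  { intros c' [y [Hy Hc']]. unfold maxle. rewrite Hc', Hc.
    exact (proj1 (proj1 (le_iff _ _) (proj1 Hsup y Hy))). }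
  assert (HsM : is_sup R SM c).
  { split; [exact Hub|]. intros v Hv.
    destruct (BC SM c (img_l_dir S Hd) Hub) as [e He].
    apply (o_trans _ _ M_poset _ e); [| exact (proj2 He v Hv)].
    assert (Hec : R e c) by exact (proj2 He c Hub).
    assert (Her : mle (proj1_sig e) (rt u)).
    { apply mle_trans with (lf u); [ rewrite <- Hc; exact Hec | apply mle_lr]. }
    destruct Her as [w [Hw1 Hw2]].
    assert (Hle : le u w).
    { apply (proj2 Hsup). intros y Hy. apply le_iff. split.
      - rewrite <- Hw1. apply (proj1 He (Lm y)). exists y; auto.
      - rewrite <- Hw2. exact (proj2 (proj1 (le_iff _ _) (proj1 Hsup y Hy))). }
    unfold maxle. rewrite Hc, Hw1. exact (proj1 (proj1 (le_iff _ _) Hle)). }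
  destruct (Hc0c SM c (img_l_dir S Hd) HsM (o_refl _ _ M_poset _)) as [c' [[s [Hs Hc']] Hc0c']].
  exists s, c'. split; [exact Hs|]. split; [exact Hc'|].
  exact (wb_mono _ _ M_poset _ _ _ _ (o_refl _ _ M_poset _) Hac0 Hc0c').
Qed.

End Basics.

Lemma dual_ax (D : IntervalDomain) : interval_domain (idle D) (idright D) (idleft D).
Proof.
  destruct (id_ax D) as [[Hpos [Hmax [Hmeet [Hcomp Hlast]]]] [Hcd [Hi [Hii [Hiiia [Hiiib Hiv]]]]]].
  split; [|split; [exact Hcd|split; [|split; [|split; [exact Hiiib|split; [exact Hiiia|exact Hiv]]]]]].
  - split; [exact Hpos|]. split.
    { intro x; destruct (Hmax x); split; assumption. }
    split.
    { intro x; apply meet_sym; apply Hmeet. }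
    split.
    { intros x y Hxy. destruct (Hcomp y x (eq_sym Hxy)) as [m [Hm [H1 H2]]].
      exists m; split; [apply meet_sym; exact Hm| split; assumption]. }
    intros x p Hp Hxp.
    destruct (Hlast x p Hp Hxp) as [[m1 [Hm1 [H11 H12]]] [m2 [Hm2 [H21 H22]]]].
    split.
    + exists m2. split; [apply meet_sym; exact Hm2|]. split; assumption.
    + exists m1. split; [apply meet_sym; exact Hm1|]. split; assumption.
  - intros x p Hp Hw; destruct (Hi x p Hp Hw) as [A B]; split; intros m Hm;
      [apply B | apply A]; apply meet_sym; exact Hm.
  - intro x. specialize (Hii x). simpl in Hii |- *. tauto.
Qed.

Definition dualID (D : IntervalDomain) : IntervalDomain :=
  {| idT := idT D; idle := idle D; idleft := idright D; idright := idleft D; id_ax := dual_ax D |}.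

Lemma maxle_dual (D : IntervalDomain) : maxle (dualID D) = fun a b => maxle D b a.
Proof.
  apply functional_extensionality; intro a. apply functional_extensionality; intro b.
  apply propositional_extensionality. unfold maxle; simpl.
  split; intros [z [H1 H2]]; exists z; auto.
Qed.

Section Dual.
Variable D : IntervalDomain.
Local Notation le := (idle D).
Local Notation lf := (idleft D).
Local Notation rt := (idright D).
Local Notation R := (maxle D).
Local Notation Rf := (fun a b => maxle D b a).

Lemma K_dual (z : D) (a b : maxD D) : proj1_sig a = lf z -> proj1_sig b = rt z ->
  (way_below Rf b a <-> exists c, way_below le z c).
Proof.
  intros Ha Hb. pose proof (K (dualID D) z b a) as H. rewrite maxle_dual in H.
  exact (H Hb Ha).
Qed.

Lemma wb_iff (x y : maxD D) : way_below R x y <-> way_below Rf y x.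
Proof.
  split.
  - intro H. destruct (wb_le _ _ (M_poset D) _ _ H) as [z [H1 H2]].
    apply (proj2 (K_dual z x y H1 H2)). exact (proj1 (K D z x y H1 H2) H).
  - intro H. destruct (wb_le _ _ (poset_flip _ (M_poset D)) _ _ H) as [z [H1 H2]].
    apply (proj2 (K D z x y H1 H2)). exact (proj1 (K_dual z x y H1 H2) H).
Qed.

Lemma wb_right (y : D) (p b : maxD D) : way_below le y (proj1_sig p) -> proj1_sig b = rt y ->
  way_below R p b.
Proof.
  intros Hw Hb. pose proof (wb_left (dualID D) y p b Hw Hb) as H.
  rewrite maxle_dual in H. exact (proj2 (wb_iff p b) H).
Qed.

Lemma cont_dual : continuous_poset Rf.
Proof. pose proof (cont (dualID D)) as H. rewrite maxle_dual in H. exact H. Qed.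

Lemma G4 (x : maxD D) : filtered R (uuarrow R x) /\ is_inf R (uuarrow R x) x.
Proof.
  destruct cont_dual as [_ [B HB]]. destruct (HB x) as [S [HS [Hd Hinf]]].
  assert (HSu : forall s, S s -> way_below R x s).
  { intros s Hs. apply (proj2 (wb_iff x s)). exact (proj2 (HS s Hs)). }
  split.
  - split.
    + destruct (proj1 Hd) as [s Hs]. exists s. exact (HSu s Hs).
    + intros u v Hu Hv.
      pose proof (proj1 (wb_iff x u) Hu) as Hu'. pose proof (proj1 (wb_iff x v) Hv) as Hv'.
      destruct (Hu' S x Hd Hinf (o_refl _ _ (M_poset D) x)) as [s1 [Hs1 H1]].
      destruct (Hv' S x Hd Hinf (o_refl _ _ (M_poset D) x)) as [s2 [Hs2 H2]].
      destruct (proj2 Hd s1 s2 Hs1 Hs2) as [s3 [Hs3 [H13 H23]]].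
      exists s3. split; [exact (HSu s3 Hs3)|].
      split.
      * exact (o_trans _ _ (M_poset D) _ _ _ H13 H1).
      * exact (o_trans _ _ (M_poset D) _ _ _ H23 H2).
  - split.
    + intros s Hs. exact (wb_le _ _ (M_poset D) _ _ Hs).
    + intros v Hv. apply (proj2 Hinf). intros s Hs. apply Hv. exact (HSu s Hs).
Qed.

Lemma sup_r (S : D -> Prop) u (b c : maxD D) : directed le S -> is_sup le S u ->
  proj1_sig c = rt u -> way_below R c b ->
  exists s (c' : maxD D), S s /\ proj1_sig c' = rt s /\ way_below R c' b.
Proof.
  intros Hd Hsup Hc Hcb.
  pose proof (proj1 (wb_iff c b) Hcb) as H.
  assert (H' : way_below (maxle (dualID D)) b c) by (rewrite maxle_dual; exact H).
  destruct (sup_l (dualID D) S u b c Hd Hsup Hc H') as [s [c' [Hs [Hc' Hw]]]].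
  rewrite maxle_dual in Hw.
  exists s, c'. split; [exact Hs|]. split; [exact Hc'|]. exact (proj2 (wb_iff c' b) Hw).
Qed.

Definition Wset (Q : maxD D -> maxD D -> Prop) : D -> Prop :=
  fun y => exists a b, Q a b /\ (exists c, proj1_sig c = lf y /\ way_below R a c) /\
                               (exists c, proj1_sig c = rt y /\ way_below R c b).

Lemma SO Q : scott_open le (Wset Q).
Proof.
  split.
  - intros y y' [a [b [HQ [[c1 [Hc1 Hw1]] [c2 [Hc2 Hw2]]]]]] Hyy'.
    destruct (proj1 (le_iff D _ _) Hyy') as [Hl Hr].
    exists a, b. split; [exact HQ|]. split.
    + exists (Lm D y'). split; [reflexivity|].
      apply (wb_mono _ _ (M_poset D) _ _ _ _ (o_refl _ _ (M_poset D) _) Hw1).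
      unfold maxle; simpl. rewrite Hc1. exact Hl.
    + exists (Rm D y'). split; [reflexivity|].
      refine (wb_mono _ _ (M_poset D) _ _ _ _ _ Hw2 (o_refl _ _ (M_poset D) _)).
      unfold maxle; simpl. rewrite Hc2. exact Hr.
  - intros S u Hd Hsup [a [b [HQ [[c1 [Hc1 Hw1]] [c2 [Hc2 Hw2]]]]]].
    destruct (sup_l D S u a c1 Hd Hsup Hc1 Hw1) as [s1 [c1' [Hs1 [Hc1' Hw1']]]].
    destruct (sup_r S u b c2 Hd Hsup Hc2 Hw2) as [s2 [c2' [Hs2 [Hc2' Hw2']]]].
    destruct (proj2 Hd s1 s2 Hs1 Hs2) as [s3 [Hs3 [H13 H23]]].
    exists s3. split; [exact Hs3|].
    exists a, b. split; [exact HQ|]. split.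
    + exists (Lm D s3). split; [reflexivity|].
      apply (wb_mono _ _ (M_poset D) _ _ _ _ (o_refl _ _ (M_poset D) _) Hw1').
      unfold maxle; simpl. rewrite Hc1'. exact (proj1 (proj1 (le_iff D _ _) H13)).
    + exists (Rm D s3). split; [reflexivity|].
      refine (wb_mono _ _ (M_poset D) _ _ _ _ _ Hw2' (o_refl _ _ (M_poset D) _)).
      unfold maxle; simpl. rewrite Hc2'. exact (proj2 (proj1 (le_iff D _ _) H23)).
Qed.

Lemma compact_M (a b : maxD D) :
  compact_in (interval_open R) (fun z => R a z /\ R z b).
Proof.
  intros I U HU Hcov. destruct (classic (R a b)) as [Hab|Hab].
  2:{ exists nil. intros z [H1 H2]. exfalso. apply Hab.
      exact (o_trans _ _ (M_poset D) _ _ _ H1 H2). }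
  destruct Hab as [z0 [Ha Hb]].
  set (V := fun i => Wset (fun a' b' => forall w, way_below R a' w -> way_below R w b' -> U i w)).
  destruct (ax_iv D z0 I V (fun i => SO _)) as [l Hl].
  - intros y [Hmax Hle].
    set (yz := exist (fun x => is_max le x) y Hmax : maxD D).
    assert (Kz : R a yz /\ R yz b).
    { destruct (proj1 (le_max_iff D _ _ Hmax) Hle) as [H1 H2].
      unfold maxle; simpl. rewrite Ha, Hb. split; assumption. }
    destruct (Hcov yz Kz) as [i Hi].
    destruct (HU i yz Hi) as [a' [b' [Ha' [Hb' Hbas]]]].
    exists i. exists a', b'. split; [exact Hbas|]. split.
    + exists yz. split; [simpl; symmetry; exact (lf_max D _ Hmax) | exact Ha'].
    + exists yz. split; [simpl; symmetry; exact (rt_max D _ Hmax) | exact Hb'].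
  - exists l. intros z [Hz1 Hz2].
    assert (Hle : le z0 (proj1_sig z)).
    { apply (le_max_iff D _ _ (proj2_sig z)). rewrite <- Ha, <- Hb. split; assumption. }
    destruct (Hl (proj1_sig z) (conj (proj2_sig z) Hle)) as [i [Hil Hi]].
    exists i. split; [exact Hil|].
    destruct Hi as [a' [b' [Hbas [[c1 [Hc1 Hw1]] [c2 [Hc2 Hw2]]]]]].
    rewrite (lf_max D _ (proj2_sig z)) in Hc1. rewrite (rt_max D _ (proj2_sig z)) in Hc2.
    apply maxD_eq in Hc1. apply maxD_eq in Hc2. subst c1 c2.
    exact (Hbas z Hw1 Hw2).
Qed.

End Dual.

Lemma restr_cont (D E : IntervalDomain) (f : D -> E) (Hf : IN_arrow D E f)
  (Hm : forall x, is_max (idle D) x -> is_max (idle E) (f x)) :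
  continuous_map (interval_open (maxle D)) (interval_open (maxle E)) (restr f Hm).
Proof.
  destruct Hf as [Hc [Hl Hr]]. intros V HV z Hz.
  destruct (HV _ Hz) as [a' [b' [Ha' [Hb' Hbas]]]].
  set (Q := fun a b : maxD E => forall w, way_below (maxle E) a w -> way_below (maxle E) w b -> V w).
  pose proof (Hc (Wset E Q) (SO E Q)) as Hpre.
  destruct (proj2 (proj1 (cdcpo D))) as [B HB].
  destruct (HB (proj1_sig z)) as [SD [HS [Hd Hsup]]].
  assert (Hfz : idleft E (f (proj1_sig z)) = f (proj1_sig z)).
  { rewrite <- Hl, (lf_max D _ (proj2_sig z)). reflexivity. }
  assert (Hfz' : idright E (f (proj1_sig z)) = f (proj1_sig z)).
  { rewrite <- Hr, (rt_max D _ (proj2_sig z)). reflexivity. }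
  assert (HWz : Wset E Q (f (proj1_sig z))).
  { exists a', b'. split; [exact Hbas|]. split.
    - exists (restr f Hm z). split; [simpl; symmetry; exact Hfz | exact Ha'].
    - exists (restr f Hm z). split; [simpl; symmetry; exact Hfz' | exact Hb']. }
  destruct (proj2 Hpre SD (proj1_sig z) Hd Hsup HWz) as [y [Hy HWy]].
  pose proof (proj2 (HS y Hy)) as Hwy.
  exists (Lm D y), (Rm D y). split; [exact (wb_left D y z (Lm D y) Hwy eq_refl)|].
  split; [exact (wb_right D y z (Rm D y) Hwy eq_refl)|].
  intros w Hw1 Hw2.
  assert (Hle : idle D y (proj1_sig w)).
  { apply (le_max_iff D _ _ (proj2_sig w)). split.
    - exact (wb_le _ _ (M_poset D) _ _ Hw1).
    - exact (wb_le _ _ (M_poset D) _ _ Hw2). }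
  destruct (proj1 Hpre y (proj1_sig w) HWy Hle) as [a'' [b'' [Hbas' [[c1 [Hc1 Hw1']] [c2 [Hc2 Hw2']]]]]].
  rewrite <- Hl, (lf_max D _ (proj2_sig w)) in Hc1.
  rewrite <- Hr, (rt_max D _ (proj2_sig w)) in Hc2.
  assert (c1 = restr f Hm w) by (apply maxD_eq; exact Hc1).
  assert (c2 = restr f Hm w) by (apply maxD_eq; exact Hc2).
  subst c1 c2. exact (Hbas' _ Hw1' Hw2').
Qed.

Theorem mainTheorem15 :
  (* on objects: (max D, ≤) is a globally hyperbolic poset *)
  (forall D : IntervalDomain, globally_hyperbolic (maxle D)) /\
  (* on arrows: f maps max(D) into max(E) ... *)
  (forall (D E : IntervalDomain) (f : D -> E), IN_arrow D E f ->
     forall x, is_max (idle D) x -> is_max (idle E) (f x)) /\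
  (* ... and its restriction is an arrow of G *)
  (forall (D E : IntervalDomain) (f : D -> E) (Hf : IN_arrow D E f)
     (Hm : forall x, is_max (idle D) x -> is_max (idle E) (f x)),
     G_arrow (maxle D) (maxle E) (restr f Hm)) /\
  (* preservation of identities *)
  (forall (D : IntervalDomain)
     (Hm : forall x, is_max (idle D) x -> is_max (idle D) ((fun y : D => y) x)),
     restr (fun y : D => y) Hm = (fun a => a)) /\
  (* preservation of composition *)
  (forall (D E F : IntervalDomain) (f : D -> E) (g : E -> F),
     IN_arrow D E f -> IN_arrow E F g ->
     forall (Hf : forall x, is_max (idle D) x -> is_max (idle E) (f x))
            (Hg : forall x, is_max (idle E) x -> is_max (idle F) (g x))
            (Hgf : forall x, is_max (idle D) x -> is_max (idle F) (g (f x))),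
     restr (fun x => g (f x)) Hgf = (fun a => restr g Hg (restr f Hf a))).
Proof.
  split; [|split; [|split; [|split]]].
  - intro D. split; [|exact (compact_M D)].
    split; [exact (cont D)|]. split.
    + intros x y. exact (wb_iff D x y).
    + exact (G4 D).
  - intros D E f [_ [Hl _]] x Hx.
    rewrite <- (lf_max D _ Hx), Hl. apply max_l.
  - intros D E f Hf Hm. split; [|exact (restr_cont D E f Hf Hm)].
    intros a b [z [H1 H2]]. destruct Hf as [_ [Hl Hr]].
    exists (f z). simpl. rewrite H1, H2, Hl, Hr. auto.
  - intros D Hm. apply functional_extensionality. intro a. apply maxD_eq. reflexivity.
  - intros. apply functional_extensionality. intro a. apply maxD_eq. reflexivity.
Qed.
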